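(* The singular curves on the phase torus (the set of pairs $(\phi_{z,1},\phi_{z,2})$ for which the curve $K$ fails to be a knot because some crossing of its $xy$-projection becomes a double point in space) are of four possible types: 1. Lines of the form $\phi_{z,2}=c$, 2. Lines of the form $\phi_{z,1}=c$, 3. Lines of the form $\phi_{z,2}=\pm \phi_{z,1}+c$, 4. Curves with the shape of $\sin(\phi_{z,2})=c \sin(\phi_{z,1})$, where $c$ is a constant that, in the last case, is neither $0$ nor $\pm 1$.
   Context: Let $K$ be a Fourier-$(1,1,2)$ knot parameterized, for $0\le t\le 2\pi$, by $x(t)=\cos(n_x t)$, $y(t)=\cos(n_y t+\phi_y)$, $z(t)=\cos(n_{z,1}t+\phi_{z,1})+A_{z,2}\cos(n_{z,2}t+\phi_{z,2})$, where $n_x,n_y,n_{z,1},n_{z,2}$ are integers such that $n_x$, $n_y$ and $\gcd(n_{z,1},n_{z,2})$ are pairwise relatively prime, $A_{z,2}$ is a real amplitude, and $\phi_y$ is fixed (with $\phi_x=0$). The phase torus is the 2-dimensional torus of pairs $(\phi_{z,1},\phi_{z,2})$. *)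

(* Defs.v *)
From Stdlib Require Import Reals ZArith List.
Open Scope R_scope.

(* Fourier-(1,1,2) curve, 0 <= t <= 2*PI, phi_x = 0. *)
Definition kx (nx : Z) (t : R) : R := cos (IZR nx * t).
Definition ky (ny : Z) (phy : R) (t : R) : R := cos (IZR ny * t + phy).
Definition kz (n1 n2 : Z) (A phi1 phi2 : R) (t : R) : R :=
  cos (IZR n1 * t + phi1) + A * cos (IZR n2 * t + phi2).

Definition is_crossing (nx ny : Z) (phy : R) (t s : R) : Prop :=
  0 <= t < 2 * PI /\ 0 <= s < 2 * PI /\ t <> s /\
  kx nx t = kx nx s /\ ky ny phy t = ky ny phy s.

(* Non-degenerate projection: only finitely many crossing parameter pairs
   (excludes the doubly-traced Lissajous case, where "crossings" are not
   isolated). *)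
Definition finitely_many_crossings (nx ny : Z) (phy : R) : Prop :=
  exists l : list (R * R), forall t s, is_crossing nx ny phy t s -> In (t, s) l.

(* The singular set on the phase torus (lifted to R x R, 2*PI-periodic)
   belonging to the crossing (t, s): the phases for which this crossing
   becomes a double point in space. *)
Definition singular_set (n1 n2 : Z) (A : R) (t s : R) (phi1 phi2 : R) : Prop :=
  kz n1 n2 A phi1 phi2 t = kz n1 n2 A phi1 phi2 s.

Definition type1 (S : R -> R -> Prop) : Prop :=
  exists c : R, forall phi1 phi2,
    S phi1 phi2 <-> exists k : Z, phi2 = c + IZR k * PI.

Definition type2 (S : R -> R -> Prop) : Prop :=
  exists c : R, forall phi1 phi2,
    S phi1 phi2 <-> exists k : Z, phi1 = c + IZR k * PI.

Definition type3 (S : R -> R -> Prop) : Prop :=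
  exists c c' : R, forall phi1 phi2,
    S phi1 phi2 <-> exists k : Z,
      phi2 = phi1 + c + 2 * IZR k * PI \/ phi2 = - phi1 + c' + 2 * IZR k * PI.

Definition type4 (S : R -> R -> Prop) : Prop :=
  exists c d1 d2 : R, c <> 0 /\ c <> 1 /\ c <> -1 /\
    forall phi1 phi2, S phi1 phi2 <-> sin (phi2 + d2) = c * sin (phi1 + d1).

(* Main.v *)
Require Import Defs.
From Stdlib Require Import Reals ZArith List.
From Stdlib Require Import Lra Lia.
Open Scope R_scope.

Lemma cos_eq_iff p q : cos p = cos q <-> sin ((p - q)/2) * sin ((p+q)/2) = 0.
Proof. pose proof (form2 p q). split; intros; nra. Qed.

Lemma sin_eq_iff a b : sin a = sin b <->
  exists k : Z, a = b + 2 * IZR k * PI \/ a = PI - b + 2 * IZR k * PI.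
Proof.
  pose proof (form4 a b) as F. split.
  - intros E. assert (H : cos ((a+b)/2) * sin ((a-b)/2) = 0) by nra.
    destruct (Rmult_integral _ _ H) as [H1|H1].
    + destruct (cos_eq_0_0 _ H1) as [k Hk]. exists k. right. lra.
    + destruct (sin_eq_0_0 _ H1) as [k Hk]. exists k. left. lra.
  - intros [k [Hk|Hk]].
    + assert (sin ((a-b)/2) = 0) by (apply sin_eq_0_1; exists k; lra). nra.
    + assert (cos ((a+b)/2) = 0) by (apply cos_eq_0_1; exists k; lra). nra.
Qed.

Lemma avoid (l : list R) : forall a b, a < b -> exists x, a < x < b /\ ~ In x l.
Proof.
  induction l as [|y l IH]; intros a b Hab.
  - exists ((a+b)/2). split; [lra| auto].
  - destruct (Rle_or_lt y a) as [H|H].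
    + destruct (IH a b Hab) as [x [Hx Hn]]. exists x. split; auto.
      intros [E|E]; [lra|auto].
    + destruct (Rle_or_lt b y) as [H'|H'].
      * destruct (IH a b Hab) as [x [Hx Hn]]. exists x. split; auto.
        intros [E|E]; [lra|auto].
      * destruct (IH a y H) as [x [Hx Hn]]. exists x. split; [lra|].
        intros [E|E]; [lra|auto].
Qed.

Lemma int_contra d m : d <> 0 -> -2*PI < d < 2*PI -> d/2 = IZR m * PI -> False.
Proof.
  intros H0 H1 H2. pose proof PI_RGT_0.
  assert (IZR m < 1). { apply Rnot_le_lt; intro C. nra. }
  assert (-1 < IZR m). { apply Rnot_le_lt; intro C. nra. }
  apply lt_IZR in H3. apply lt_IZR in H4.
  assert (m = 0%Z) by lia. subst. simpl in H2. lra.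
Qed.

Lemma nz_lemma n n1 n2 d : Z.gcd n (Z.gcd n1 n2) = 1%Z ->
  sin (IZR n * (d/2)) = 0 -> sin (IZR n1 * (d/2)) = 0 -> sin (IZR n2 * (d/2)) = 0 ->
  exists m, d/2 = IZR m * PI.
Proof.
  intros G H H1 H2.
  destruct (Z.gcd_bezout _ _ _ G) as [u [v E]].
  destruct (Z.gcd_bezout n1 n2 _ eq_refl) as [u' [v' E']].
  destruct (sin_eq_0_0 _ H) as [k Hk].
  destruct (sin_eq_0_0 _ H1) as [k1 Hk1].
  destruct (sin_eq_0_0 _ H2) as [k2 Hk2].
  rewrite <- E' in E.
  apply (f_equal IZR) in E. repeat (rewrite plus_IZR in E || rewrite mult_IZR in E).
  exists (u*k + v*(u'*k1+v'*k2))%Z.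
  repeat (rewrite plus_IZR || rewrite mult_IZR).
  transitivity ((IZR u * IZR n + IZR v * (IZR u' * IZR n1 + IZR v' * IZR n2)) * (d/2)).
  { rewrite E. ring. }
  replace ((IZR u * IZR n + IZR v * (IZR u' * IZR n1 + IZR v' * IZR n2)) * (d/2))
    with (IZR u * (IZR n * (d/2)) + IZR v * (IZR u' * (IZR n1 * (d/2)) + IZR v' * (IZR n2 * (d/2)))) by ring.
  rewrite Hk, Hk1, Hk2. ring.
Qed.

Lemma kz_eq n1 n2 A p1 p2 t s :
  kz n1 n2 A p1 p2 t = kz n1 n2 A p1 p2 s <->
  sin (IZR n1 * ((t-s)/2)) * sin (p1 + IZR n1 * ((t+s)/2)) +
  A * sin (IZR n2 * ((t-s)/2)) * sin (p2 + IZR n2 * ((t+s)/2)) = 0.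
Proof.
  unfold kz.
  pose proof (form2 (IZR n1 * t + p1) (IZR n1 * s + p1)) as F1.
  pose proof (form2 (IZR n2 * t + p2) (IZR n2 * s + p2)) as F2.
  replace ((IZR n1 * t + p1 - (IZR n1 * s + p1)) / 2) with (IZR n1 * ((t-s)/2)) in F1 by field.
  replace ((IZR n1 * t + p1 + (IZR n1 * s + p1)) / 2) with (p1 + IZR n1 * ((t+s)/2)) in F1 by field.
  replace ((IZR n2 * t + p2 - (IZR n2 * s + p2)) / 2) with (IZR n2 * ((t-s)/2)) in F2 by field.
  replace ((IZR n2 * t + p2 + (IZR n2 * s + p2)) / 2) with (p2 + IZR n2 * ((t+s)/2)) in F2 by field.
  split; intros; nra.
Qed.

Lemma not_both (nx ny n1 n2 : Z) (phy t s : R) :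
  Z.gcd nx (Z.gcd n1 n2) = 1%Z ->
  Z.gcd ny (Z.gcd n1 n2) = 1%Z ->
  finitely_many_crossings nx ny phy ->
  is_crossing nx ny phy t s ->
  ~ (sin (IZR n1 * ((t-s)/2)) = 0 /\ sin (IZR n2 * ((t-s)/2)) = 0).
Proof.
  intros Gx Gy [l Hl] Hc [H1 H2].
  pose proof Hc as (Ht & Hs & Hne & Hx & Hy).
  unfold kx, ky in Hx, Hy.
  apply cos_eq_iff in Hx. apply cos_eq_iff in Hy.
  replace ((IZR nx * t - IZR nx * s) / 2) with (IZR nx * ((t-s)/2)) in Hx by field.
  replace ((IZR nx * t + IZR nx * s) / 2) with (IZR nx * ((t+s)/2)) in Hx by field.
  replace ((IZR ny * t + phy - (IZR ny * s + phy)) / 2) with (IZR ny * ((t-s)/2)) in Hy by field.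
  replace ((IZR ny * t + phy + (IZR ny * s + phy)) / 2) with (IZR ny * ((t+s)/2) + phy) in Hy by field.
  assert (Hd : t - s <> 0) by lra.
  assert (Hr : -2*PI < t - s < 2*PI) by lra.
  destruct (Rmult_integral _ _ Hx) as [Px|Qx].
  { destruct (nz_lemma _ _ _ _ Gx Px H1 H2) as [m Hm]. exact (int_contra _ _ Hd Hr Hm). }
  destruct (Rmult_integral _ _ Hy) as [Py|Qy].
  { destruct (nz_lemma _ _ _ _ Gy Py H1 H2) as [m Hm]. exact (int_contra _ _ Hd Hr Hm). }
  assert (Fam : forall x, 0 <= x < 2*PI -> 0 <= t+s-x < 2*PI -> x <> t+s-x ->
            In x (map fst l)).
  { intros x Hx1 Hx2 Hx3.
    assert (C : is_crossing nx ny phy x (t+s-x)).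
    { repeat split; try lra; unfold kx, ky; apply cos_eq_iff.
      - replace ((IZR nx * x + IZR nx * (t + s - x)) / 2) with (IZR nx * ((t+s)/2)) by field.
        rewrite Qx. ring.
      - replace ((IZR ny * x + phy + (IZR ny * (t + s - x) + phy)) / 2) with (IZR ny * ((t+s)/2) + phy) by field.
        rewrite Qy. ring. }
    apply Hl in C. change x with (fst (x, t+s-x)). apply in_map. exact C. }
  destruct (Rlt_or_le t s) as [L|L].
  - destruct (avoid (map fst l) t ((t+s)/2)) as [x [Hx1 Hx2]]; [lra|].
    apply Hx2, Fam; lra.
  - destruct (avoid (map fst l) ((t+s)/2) t) as [x [Hx1 Hx2]]; [lra|].
    apply Hx2, Fam; lra.
Qed.

Theorem proposition3 (nx ny n1 n2 : Z) (A phy : R) :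
  Z.gcd nx ny = 1%Z ->
  Z.gcd nx (Z.gcd n1 n2) = 1%Z ->
  Z.gcd ny (Z.gcd n1 n2) = 1%Z ->
  A <> 0 ->
  finitely_many_crossings nx ny phy ->
  forall t s : R, is_crossing nx ny phy t s ->
    type1 (singular_set n1 n2 A t s) \/
    type2 (singular_set n1 n2 A t s) \/
    type3 (singular_set n1 n2 A t s) \/
    type4 (singular_set n1 n2 A t s).
Proof.
  intros G0 Gx Gy HA Hf t s Hc.
  pose proof (not_both _ _ _ _ _ _ _ Gx Gy Hf Hc) as NB.
  unfold singular_set.
  set (a := sin (IZR n1 * ((t-s)/2))) in *.
  set (g := sin (IZR n2 * ((t-s)/2))) in *.
  set (b1 := IZR n1 * ((t+s)/2)).
  set (b2 := IZR n2 * ((t+s)/2)).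
  assert (KE : forall p1 p2, kz n1 n2 A p1 p2 t = kz n1 n2 A p1 p2 s <->
     a * sin (p1 + b1) + A * g * sin (p2 + b2) = 0) by (intros; apply kz_eq).
  destruct (Req_dec a 0) as [Ha|Ha].
  { assert (Hg : g <> 0) by tauto.
    left. exists (-b2). intros p1 p2. rewrite KE, Ha. split.
    - intro E. assert (S0 : sin (p2 + b2) = 0).
      { assert (A * g <> 0) by (apply Rmult_integral_contrapositive; auto).
        apply (Rmult_eq_reg_l (A*g)); [lra|auto]. }
      destruct (sin_eq_0_0 _ S0) as [k Hk]. exists k. lra.
    - intros [k Hk]. rewrite (sin_eq_0_1 (p2 + b2)); [ring|]. exists k. lra. }
  destruct (Req_dec g 0) as [Hg|Hg].
  { right; left. exists (-b1). intros p1 p2. rewrite KE, Hg. split.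
    - intro E. assert (S0 : sin (p1 + b1) = 0).
      { apply (Rmult_eq_reg_l a); [lra|auto]. }
      destruct (sin_eq_0_0 _ S0) as [k Hk]. exists k. lra.
    - intros [k Hk]. rewrite (sin_eq_0_1 (p1 + b1)); [ring|]. exists k. lra. }
  assert (HAg : A * g <> 0) by (apply Rmult_integral_contrapositive; auto).
  set (c := - a / (A * g)).
  assert (KE2 : forall p1 p2, kz n1 n2 A p1 p2 t = kz n1 n2 A p1 p2 s <->
     sin (p2 + b2) = c * sin (p1 + b1)).
  { intros p1 p2. rewrite KE. unfold c. split; intro E.
    - field_simplify; auto. apply (Rmult_eq_reg_l (A*g)); auto. field_simplify; auto. lra.
    - apply (Rmult_eq_compat_l (A*g)) in E.
      replace (A * g * (- a / (A * g) * sin (p1 + b1))) with (- a * sin (p1 + b1)) in E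
        by (field; auto). lra. }
  destruct (Req_dec c 1) as [H1|H1].
  { right; right; left. exists (b1 - b2), (PI - b1 - b2). intros p1 p2.
    rewrite KE2, H1, Rmult_1_l, sin_eq_iff. split; intros [k [Hk|Hk]]; exists k;
      [left|right|left|right]; lra. }
  destruct (Req_dec c (-1)) as [H2|H2].
  { right; right; left. exists (PI + b1 - b2), (- b1 - b2). intros p1 p2.
    rewrite KE2, H2.
    replace (-1 * sin (p1 + b1)) with (sin (- (p1 + b1))) by (rewrite sin_neg; ring).
    rewrite sin_eq_iff. split; intros [k [Hk|Hk]]; exists k;
      [right|left|right|left]; lra. }
  right; right; right. exists c, b1, b2. split; [|split; [auto|split; [auto|]]].
  - unfold c. intro C. apply Ha.
    apply (Rmult_eq_compat_l (A*g)) in C.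
    replace (A * g * (- a / (A * g))) with (-a) in C by (field; auto). lra.
  - intros p1 p2. apply KE2.
Qed.
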